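(* Let $X$ be a topological space and $(Y,d)$ a metric space. For $f\in C(X,Y)$ and $\epsilon\in LSC(X,(0,1))$ put $B(f,\epsilon)=\{g\in C(X,Y): d(f(x),g(x))<\epsilon(x)\text{ for all }x\in X\}$. Then the family of all sets $B(f,\epsilon)$ with $f\in C(X,Y)$ and $\epsilon\in LSC(X,(0,1))$ is a base for the graph topology $\tau_\Gamma$ on $C(X,Y)$.
   Context: For topological spaces $X,Y$, $C(X,Y)$ denotes the set of continuous maps $X\to Y$; each $f\in C(X,Y)$ is identified with its graph $\{(x,f(x)):x\in X\}\subset X\times Y$. For $G$ open in $X\times Y$ let $F_G=\{f\in C(X,Y): f\subset G\}$. The graph topology $\tau_\Gamma$ on $C(X,Y)$ is the topology having the sets $F_G$ ($G$ open in $X\times Y$) as a base. $LSC(X,(0,1))$ denotes the set of all lower semicontinuous functions $X\to(0,1)$. *)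

(* Defs.v *)
From Stdlib Require Import Reals.
Open Scope R_scope.

Record Topology (X : Type) := {
  is_open : (X -> Prop) -> Prop;
  open_full : is_open (fun _ => True);
  open_inter : forall U V, is_open U -> is_open V ->
                 is_open (fun x => U x /\ V x);
  open_union : forall F : (X -> Prop) -> Prop,
                 (forall U, F U -> is_open U) ->
                 is_open (fun x => exists U, F U /\ U x)
}.
Arguments is_open {X} t U.

Record Metric (Y : Type) := {
  dist : Y -> Y -> R;
  dist_nonneg : forall x y, 0 <= dist x y;
  dist_eq0 : forall x y, dist x y = 0 <-> x = y;
  dist_sym : forall x y, dist x y = dist y x;
  dist_tri : forall x y z, dist x z <= dist x y + dist y z
}.
Arguments dist {Y} m _ _.

Definition metric_open {Y : Type} (d : Metric Y) (V : Y -> Prop) : Prop :=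
  forall y, V y -> exists r, 0 < r /\ forall z, dist d y z < r -> V z.

Definition prod_open {X Y : Type} (tX : Topology X) (d : Metric Y)
  (G : X * Y -> Prop) : Prop :=
  forall x y, G (x, y) ->
    exists U V, is_open tX U /\ metric_open d V /\ U x /\ V y /\
      forall x' y', U x' -> V y' -> G (x', y').

Definition continuous {X Y : Type} (tX : Topology X) (d : Metric Y)
  (f : X -> Y) : Prop :=
  forall V, metric_open d V -> is_open tX (fun x => V (f x)).

Definition CXY {X Y : Type} (tX : Topology X) (d : Metric Y) : Type :=
  { f : X -> Y | continuous tX d f }.

Definition lsc {X : Type} (tX : Topology X) (e : X -> R) : Prop :=
  forall t : R, is_open tX (fun x => t < e x).

Definition LSC01 {X : Type} (tX : Topology X) (e : X -> R) : Prop :=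
  lsc tX e /\ forall x, 0 < e x < 1.

Definition graph_in {X Y : Type} (f : X -> Y) (G : X * Y -> Prop) : Prop :=
  forall x, G (x, f x).

Definition F_G {X Y : Type} {tX : Topology X} {d : Metric Y}
  (G : X * Y -> Prop) : CXY tX d -> Prop :=
  fun f => graph_in (proj1_sig f) G.

(* Open sets of the graph topology: the topology generated by the base
   { F_G : G open in X x Y }. *)
Definition graph_open {X Y : Type} (tX : Topology X) (d : Metric Y)
  (W : CXY tX d -> Prop) : Prop :=
  forall f, W f -> exists G, prod_open tX d G /\ F_G G f /\
    forall g, F_G G g -> W g.

Definition Ball {X Y : Type} {tX : Topology X} {d : Metric Y}
  (f : CXY tX d) (e : X -> R) : CXY tX d -> Prop :=
  fun g => forall x, dist d (proj1_sig f x) (proj1_sig g x) < e x.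

Definition is_base {T : Type} (op : (T -> Prop) -> Prop)
  (Bs : (T -> Prop) -> Prop) : Prop :=
  (forall B, Bs B -> op B) /\
  (forall W, op W -> forall f, W f ->
     exists B, Bs B /\ B f /\ forall g, B g -> W g).

(* Main.v *)
Require Import Defs.
From Stdlib Require Import Reals Lra Classical FunctionalExtensionality PropExtensionality.
Open Scope R_scope.

Lemma ball_open {Y : Type} (d : Metric Y) (c : Y) (r : R) :
  metric_open d (fun y => Defs.dist d c y < r).
Proof.
  intros y Hy. exists (r - Defs.dist d c y). split; [lra|].
  intros z Hz. pose proof (Defs.dist_tri _ d c y z). lra.
Qed.

Lemma part1 (X Y : Type) (tX : Topology X) (d : Metric Y) (f : CXY tX d)
  (e : X -> R) : LSC01 tX e -> graph_open tX d (Ball f e).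
Proof.
  intros [Hl He] g Hg.
  destruct f as [ff Hf]. simpl in *.
  exists (fun p => Defs.dist d (ff (fst p)) (snd p) < e (fst p)).
  split; [|split].
  - intros x0 y0 H0. simpl in H0.
    set (dl := e x0 - Defs.dist d (ff x0) y0).
    exists (fun x => e x0 - dl/3 < e x /\ Defs.dist d (ff x0) (ff x) < dl/3).
    exists (fun y => Defs.dist d y0 y < dl/3).
    split; [apply open_inter; [apply Hl | apply (Hf _ (ball_open d (ff x0) (dl/3)))]|].
    split; [apply ball_open|].
    split; [split; [unfold dl in *; lra| rewrite (proj2 (Defs.dist_eq0 _ d _ _) eq_refl); unfold dl in *; lra]|].
    split; [rewrite (proj2 (Defs.dist_eq0 _ d _ _) eq_refl); unfold dl in *; lra|].
    intros x' y' [H1 H2] H3. simpl.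
    pose proof (Defs.dist_tri _ d (ff x') (ff x0) y0).
    pose proof (Defs.dist_tri _ d (ff x') y0 y').
    rewrite (Defs.dist_sym _ d (ff x') (ff x0)) in *.
    unfold dl in *. lra.
  - intro x. simpl. apply Hg.
  - intros h Hh x. apply (Hh x).
Qed.

Lemma part2 (X Y : Type) (tX : Topology X) (d : Metric Y) (W : CXY tX d -> Prop)
  (HW : graph_open tX d W) (f : CXY tX d) (Wf : W f) :
  exists B, (exists (f0 : CXY tX d) (e : X -> R), LSC01 tX e /\ B = Ball f0 e)
    /\ B f /\ forall g, B g -> W g.
Proof.
  destruct (HW f Wf) as [G [HG [Gf GW]]].
  destruct f as [ff Hf] eqn:Ef. simpl in *.
  set (S x := fun s => 0 < s < 1 /\ exists U, is_open tX U /\ U x /\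
        forall x' y, U x' -> Defs.dist d (ff x') y < s -> G (x', y)).
  assert (Sb : forall x, bound (S x)).
  { intro x. exists 1. intros s [Hs _]. lra. }
  assert (Sne : forall x, exists s, S x s).
  { intro x. destruct (HG x (ff x) (Gf x)) as [U [V [HU [HV [Ux [Vx HUV]]]]]].
    destruct (HV _ Vx) as [r [Hr Hr2]].
    exists (Rmin (r/2) (1/2)). split.
    { split; [apply Rmin_pos; lra | pose proof (Rmin_r (r/2) (1/2)); lra]. }
    exists (fun x' => U x' /\ Defs.dist d (ff x) (ff x') < r/2).
    split; [apply open_inter; [exact HU | apply (Hf _ (ball_open d (ff x) (r/2)))]|].
    split; [split; [exact Ux| rewrite (proj2 (Defs.dist_eq0 _ d _ _) eq_refl); lra]|].
    intros x' y [H1 H2] H3. apply HUV; [exact H1|]. apply Hr2.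
    pose proof (Defs.dist_tri _ d (ff x) (ff x') y). pose proof (Rmin_l (r/2) (1/2)). lra. }
  set (m x := proj1_sig (completeness (S x) (Sb x) (Sne x))).
  assert (Hm : forall x, is_lub (S x) (m x)).
  { intro x. unfold m. destruct (completeness _ _ _) as [mm Hmm]. exact Hmm. }
  assert (Hup : forall x s, S x s -> s <= m x). { intros x s Hs. apply (proj1 (Hm x)). exact Hs. }
  assert (Hgt : forall x t, t < m x -> exists s, S x s /\ t < s).
  { intros x t Ht. apply NNPP. intro Hn. assert (m x <= t); [|lra].
    apply (proj2 (Hm x)). intros s Hs. destruct (Rle_or_lt s t) as [|Hl]; auto.
    exfalso. apply Hn. exists s. auto. }
  assert (Hpos : forall x, 0 < m x).
  { intro x. destruct (Sne x) as [s Hs]. pose proof (Hup x s Hs). destruct Hs as [[? ?] _]. lra. }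
  assert (Hle1 : forall x, m x <= 1).
  { intro x. apply (proj2 (Hm x)). intros s [Hs _]. lra. }
  exists (Ball (exist _ ff Hf) (fun x => m x / 2)). split; [|split].
  - exists (exist _ ff Hf), (fun x => m x / 2). split; [|reflexivity].
    split.
    + intro t.
      set (F := fun U => is_open tX U /\ exists s, 2*t < s /\ 0 < s < 1 /\
            forall x' y, U x' -> Defs.dist d (ff x') y < s -> G (x', y)).
      assert (E : (fun x => t < m x / 2) = (fun x => exists U, F U /\ U x)).
      { apply functional_extensionality. intro x. apply propositional_extensionality.
        split.
        - intro Ht. destruct (Hgt x (2*t) ltac:(lra)) as [s [[Hs [U [HU [Ux HUG]]]] Hts]].
          exists U. split; [|exact Ux]. split; [exact HU|]. exists s. auto.
        - intros [U [[HU [s [Hts [Hs HUG]]]] Ux]].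
          assert (S x s) by (split; [exact Hs| exists U; auto]).
          pose proof (Hup x s H). lra. }
      rewrite E. apply open_union. intros U [HU _]. exact HU.
    + intro x. pose proof (Hpos x). pose proof (Hle1 x). lra.
  - intro x. simpl. rewrite (proj2 (Defs.dist_eq0 _ d _ _) eq_refl). pose proof (Hpos x). lra.
  - intros g Hg. apply GW. intro x. unfold Ball in Hg. simpl in Hg.
    specialize (Hg x). pose proof (Defs.dist_nonneg _ d (ff x) (proj1_sig g x)).
    destruct (Hgt x (Defs.dist d (ff x) (proj1_sig g x)) ltac:(lra)) as [s [[_ [U [_ [Ux HUG]]]] Hs]].
    apply HUG; auto.
Qed.

Theorem lemma1p1 (X Y : Type) (tX : Topology X) (d : Metric Y) :
  is_base (graph_open tX d)
    (fun B : CXY tX d -> Prop =>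
       exists (f : CXY tX d) (e : X -> R), LSC01 tX e /\ B = Ball f e).
Proof.
  split.
  - intros B [f [e [He ->]]]. apply part1. exact He.
  - intros W HW f Wf. apply part2; auto.
Qed.
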